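(* Let $G$ be a topological group (a group with a topology making multiplication jointly continuous and inversion continuous; no separation axiom assumed). Then $G$ is dense-connected if and only if the topology of $G$ is indiscrete.
   Context: A space $X$ is dense-connected if every dense subset of $X$ (with the subspace topology) is connected. *)

(* Defs.v *)
From HB Require Import structures.
From mathcomp Require Import all_boot all_algebra.
From mathcomp Require Import all_classical all_reals all_analysis.
Set Implicit Arguments. Unset Strict Implicit. Unset Printing Implicit Defensive.
Local Open Scope classical_set_scope.

Definition topological_group (T : topologicalType)
    (mul : T -> T -> T) (inv : T -> T) (e : T) : Prop :=
  [/\ (forall x y z, mul x (mul y z) = mul (mul x y) z),
      (forall x, mul e x = x /\ mul x e = x),
      (forall x, mul (inv x) x = e /\ mul x (inv x) = e),
      continuous (fun p : T * T => mul p.1 p.2)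
    & continuous inv].

(* every dense subset, with the subspace topology, is connected
   (library [connected A] is connectedness of A in the subspace topology) *)
Definition dense_connected (T : topologicalType) : Prop :=
  forall S : set T, dense S -> connected S.

Definition indiscrete (T : topologicalType) : Prop :=
  forall U : set T, open U -> U = set0 \/ U = setT.

(* Main.v *)
Require Import Defs.
From HB Require Import structures.
From mathcomp Require Import all_boot all_algebra.
From mathcomp Require Import all_classical all_reals all_analysis.

Local Open Scope classical_set_scope.

Lemma indiscrete_dc (T : topologicalType) : indiscrete T -> dense_connected T.
Proof.
move=> hI S _ B [b Bb] [C oC BE] _.
case: (hI C oC) => C0.
  by exfalso; move: Bb; rewrite BE C0 => -[].
by rewrite BE C0 setIT.
Qed.

Lemma dc_hyper (T : topologicalType) : dense_connected T ->
  forall U : set T, open U -> U !=set0 -> dense U.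
Proof.
move=> hD U oU U0 V0 [pt Qo] oQ.
apply: contrapT => hOU.
have disj : forall V : set T, open V -> (forall z, V z -> ~ U z) ->
    forall v, V v -> ~ closure U v.
  move=> V oV hV v Vv cl.
  have [z [Uz Vz]] := cl V (open_nbhs_nbhs (conj oV Vv)).
  exact: (hV z Vz Uz).
have hOU' : forall z, V0 z -> ~ U z by move=> z Qz Uz; apply: hOU; exists z.
pose W := ~` closure U.
pose S := U `|` W.
have dS : dense S.
  move=> V [v Vv] oV.
  have [[z [Vz Uz]]|nVU] := pselect (V `&` U !=set0).
    by exists z; split => //; left.
  have hV : forall z, V z -> ~ U z by move=> z Vz Uz; apply: nVU; exists z.
  by exists v; split => //; right; exact: (disj V oV hV v Vv).
have cS := hD S dS.
have US : U = S.
  apply: cS => //.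
  - exists U => //; apply/seteqP; split => z /=.
      by move=> Uz; split => //; left.
    by case.
  - exists (closure U); first exact: closed_closure.
    apply/seteqP; split => z /=.
      by move=> Uz; split; [left|exact: subset_closure].
    by case => -[//|Wz] cz.
have So : S pt by right; exact: (disj V0 oQ hOU' pt Qo).
by apply: (hOU' pt Qo); rewrite US.
Qed.
Lemma hyper_indiscrete (T : topologicalType) (mul : T -> T -> T) (inv : T -> T)
    (e : T) : topological_group mul inv e ->
  (forall U : set T, open U -> U !=set0 -> dense U) -> indiscrete T.
Proof.
case=> mA m1 mV hm hi hH U oU.
have [->|/set0P [u Uu]] := eqVneq U set0; first by left.
right.
have invU : forall y z, mul y z = e -> y = inv z.
  move=> y z yz; by rewrite -[y](proj2 (m1 y)) -(proj2 (mV z)) mA yz (proj1 (m1 _)).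
have invM : forall a b, inv (mul a b) = mul (inv b) (inv a).
  move=> a b; symmetry; apply: invU.
  by rewrite -mA [mul (inv a) _]mA (proj1 (mV a)) (proj1 (m1 _)) (proj1 (mV b)).
have invK : forall a, inv (inv a) = a.
  by move=> a; symmetry; apply: invU; exact: (proj2 (mV a)).
have cl : forall c, continuous (mul c).
  move=> c g; apply: (@continuous_comp _ _ _ (fun g => (c, g)) (fun p : T * T => mul p.1 p.2)).
    exact: (cvg_pair (cvg_cst c) cvg_id).
  exact: hm.
have cF : {for u, continuous (fun q => mul (inv q) u)}.
  apply: (@continuous_comp _ _ _ (fun q => (inv q, u)) (fun p : T * T => mul p.1 p.2)).
    exact: (cvg_pair (hi u) (cvg_cst u)).
  exact: hm.
have nU : nbhs (mul u (mul (inv u) u)) U.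
  by rewrite (proj1 (mV u)) (proj2 (m1 u)); exact: open_nbhs_nbhs.
case: (hm (u, mul (inv u) u) U nU) => -[P1 Q1] /= [P1u Q1u] PQ.
have Q2u : nbhs u [set q | Q1 (mul (inv q) u)] := cF Q1 Q1u.
pose A := P1 `&` [set q | Q1 (mul (inv q) u)].
have An : nbhs u A by apply: filterI.
pose A0 := A°.
have oA0 : open A0 by exact: open_interior.
have A0u : A0 u by apply: nbhs_singleton; exact: nbhs_interior.
apply/seteqP; split => // x _.
pose c := mul u (inv x).
pose B := [set g | A0 (mul c g)].
have oB : open B by exact: (proj1 (continuousP _) (cl c) A0 oA0).
have Bx : B x by rewrite /B /= /c -mA (proj1 (mV x)) (proj2 (m1 u)).
have [g [Bg A0g]] := hH A0 oA0 (ex_intro _ u A0u) B (ex_intro _ x Bx) oB.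
have [P1g _] := interior_subset A0g.
have [_ Q1a] := interior_subset Bg.
have := PQ (g, mul (inv (mul c g)) u) (conj P1g Q1a).
rewrite /= invM /c invM invK.
by rewrite -!mA (proj1 (mV u)) (proj2 (m1 x)) mA (proj2 (mV g)) (proj1 (m1 x)).
Qed.

Theorem corollary4p5 (T : topologicalType) (mul : T -> T -> T) (inv : T -> T)
    (e : T) :
  topological_group mul inv e -> (dense_connected T <-> indiscrete T).
Proof.
move=> hG; split.
  by move=> hD; apply: (@hyper_indiscrete T mul inv e hG); exact: dc_hyper.
exact: indiscrete_dc.
Qed.
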